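(* Let $B$ be a transitive relation on $\mathcal{SC}$. Then for all $\sigma_1,\sigma_2\in\mathcal{SC}$, $\sigma_1\preceq_B\sigma_2$ implies $\sigma_1\sqsubseteq_B\sigma_2$.
   Context: Fix base types $BT$ with preorder $\leq_{\mathsf b}$ and labels $\mathcal L$. Contract terms: $\sigma::=\mathbf 1\mid ?\mathtt t.\sigma\mid !\mathtt t.\sigma\mid !(\sigma).\sigma\mid ?(\sigma).\sigma\mid \sum_{i\in I}?l_i.\sigma_i\mid \bigoplus_{i\in I}!l_i.\sigma_i\mid \mu x.\sigma\mid x$ ($I$ finite nonempty, labels distinct). $\mathcal{SC}$ = closed guarded terms (guarded: in each $\mu x.\sigma'$, $x$ occurs in $\sigma'$ only under constructors other than $\mu$). $\mathrm{unfold}(\mu x.\sigma')=\mathrm{unfold}(\sigma'[\mu x.\sigma'/x])$, otherwise $\mathrm{unfold}(\sigma)=\sigma$. LTS: $\mathbf 1\xrightarrow\checkmark$; $\lambda.\sigma\xrightarrow\lambda\sigma$ for prefixes (including $!l.\sigma$); $\bigoplus_{i\in I}!l_i.\sigma_i\xrightarrow\tau!l_i.\sigma_i$ for $|I|>1$; $\sum ?l_i.\sigma_i\xrightarrow{?l_i}\sigma_i$; $\mu x.\sigma\xrightarrow\tau\sigma[\mu x.\sigma/x]$. For $B\subseteq\mathcal{SC}^2$: $\lambda_1\bowtie_B\lambda_2$ iff the pair is $(!l,?l)$, $(?l,!l)$, $(!\mathtt t_1,?\mathtt t_2)$ with $\mathtt t_1\leq_{\mathsf b}\mathtt t_2$,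 $(?\mathtt t_1,!\mathtt t_2)$ with $\mathtt t_2\leq_{\mathsf b}\mathtt t_1$, $(!(\sigma_1),?(\sigma_2))$ with $\sigma_1B\sigma_2$, $(?(\sigma_1),!(\sigma_2))$ with $\sigma_2B\sigma_1$. $\rho\|\sigma\xrightarrow\tau_B$ by a $\tau$ of either side, or synchronisation $\rho\xrightarrow{\lambda_1}\rho'$, $\sigma\xrightarrow{\lambda_2}\sigma'$, $\lambda_1\bowtie_B\lambda_2$ giving $\rho'\|\sigma'$. $\dashv_B$: greatest $R$ with $\rho R\sigma$ implying (i) if $\rho\|\sigma$ has no $\xrightarrow\tau_B$ move then $\rho\xrightarrow\checkmark$, $\sigma\xrightarrow\checkmark$; (ii) every $\rho\|\sigma\xrightarrow\tau_B\rho'\|\sigma'$ has $\rho'R\sigma'$. $\sigma_1\sqsubseteq_B\sigma_2$ iff $\forall\rho$, $\rho\dashv_B\sigma_1\Rightarrow\rho\dashv_B\sigma_2$. Syntactic preorder: for $R,B\subseteq\mathcal{SC}^2$, $\mathcal S(R,B)$ is the set of $(\sigma_1,\sigma_2)$ satisfying all of: if $\mathrm{unfold}(\sigma_1)=\mathbf 1$ then $\mathrm{unfold}(\sigma_2)=\mathbf 1$; if $\mathrm{unfold}(\sigma_1)=?\mathtt t_1.\sigma_1'$ then $\mathrm{unfold}(\sigma_2)=?\mathtt t_2.\sigma_2'$ with $\sigma_1'R\sigma_2'$, $\mathtt t_1\leq_{\mathsf b}\mathtt t_2$; if $\mathrm{unfold}(\sigma_1)=!\mathtt t_1.\sigma_1'$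 then $\mathrm{unfold}(\sigma_2)=!\mathtt t_2.\sigma_2'$ with $\sigma_1'R\sigma_2'$, $\mathtt t_2\leq_{\mathsf b}\mathtt t_1$; if $\mathrm{unfold}(\sigma_1)=!(\sigma^m_1).\sigma_1'$ then $\mathrm{unfold}(\sigma_2)=!(\sigma^m_2).\sigma_2'$ with $\sigma_1'R\sigma_2'$, $\sigma^m_2B\sigma^m_1$; if $\mathrm{unfold}(\sigma_1)=?(\sigma^m_1).\sigma_1'$ then $\mathrm{unfold}(\sigma_2)=?(\sigma^m_2).\sigma_2'$ with $\sigma_1'R\sigma_2'$, $\sigma^m_1B\sigma^m_2$; if $\mathrm{unfold}(\sigma_1)=\sum_{i\in I}?l_i.\sigma^1_i$ then $\mathrm{unfold}(\sigma_2)=\sum_{j\in J}?l_j.\sigma^2_j$ with $I\subseteq J$ and $\sigma^1_iR\sigma^2_i$ for $i\in I$; if $\mathrm{unfold}(\sigma_1)=\bigoplus_{i\in I}!l_i.\sigma^1_i$ then $\mathrm{unfold}(\sigma_2)=\bigoplus_{j\in J}!l_j.\sigma^2_j$ with $J\subseteq I$ and $\sigma^1_jR\sigma^2_j$ for $j\in J$. $\preceq_B$ is the greatest $R$ with $R\subseteq\mathcal S(R,B)$. *)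

(* Defs.v *)
From Stdlib Require Import List Arith Bool.
Import ListNotations.

Set Implicit Arguments.

Section Contracts.

(* BT : base types, with preorder [leb] ; L : labels *)
Context {BT L : Type}.

(* Contract terms; recursion variables are named by nat.
   [Ext ps] is the external choice  sum_{i} ?l_i.s_i  (?l.s is Ext [(l,s)]),
   [Int ps] is the internal choice  oplus_{i} !l_i.s_i (!l.s is Int [(l,s)]). *)
Inductive contract : Type :=
| One : contract
| InT : BT -> contract -> contract
| OutT : BT -> contract -> contract
| OutS : contract -> contract -> contract
| InS : contract -> contract -> contract
| Ext : list (L * contract) -> contract
| Int : list (L * contract) -> contract
| Mu : nat -> contract -> contract
| Var : nat -> contract.

Fixpoint occurs_free (x : nat) (t : contract) : bool :=
  match t with
  | One => false
  | InT _ s | OutT _ s => occurs_free x s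
  | OutS m s | InS m s => occurs_free x m || occurs_free x s
  | Ext ps | Int ps => existsb (fun p => occurs_free x (snd p)) ps
  | Mu y s => if Nat.eqb x y then false else occurs_free x s
  | Var y => Nat.eqb x y
  end.

Fixpoint unguarded (x : nat) (t : contract) : bool :=
  match t with
  | Var y => Nat.eqb x y
  | Mu y s => if Nat.eqb x y then false else unguarded x s
  | _ => false
  end.

(* guarded: in each Mu x s, x occurs in s only under constructors other than Mu;
   also includes well-formedness of choices: nonempty, pairwise distinct labels *)
Fixpoint guarded_wf (t : contract) : Prop :=
  match t with
  | One | Var _ => True
  | InT _ s | OutT _ s => guarded_wf s
  | OutS m s | InS m s => guarded_wf m /\ guarded_wf s
  | Ext ps | Int ps =>
      ps <> [] /\ NoDup (map fst ps) /\
      fold_right (fun p acc => guarded_wf (snd p) /\ acc) True ps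
  | Mu x s => unguarded x s = false /\ guarded_wf s
  end.

Definition closed (t : contract) : Prop := forall x, occurs_free x t = false.

Definition SC (t : contract) : Prop := closed t /\ guarded_wf t.

(* substitution t[u/x] (only used with u closed, so no capture) *)
Fixpoint subst (u : contract) (x : nat) (t : contract) : contract :=
  match t with
  | One => One
  | InT b s => InT b (subst u x s)
  | OutT b s => OutT b (subst u x s)
  | OutS m s => OutS (subst u x m) (subst u x s)
  | InS m s => InS (subst u x m) (subst u x s)
  | Ext ps => Ext (map (fun p => (fst p, subst u x (snd p))) ps)
  | Int ps => Int (map (fun p => (fst p, subst u x (snd p))) ps)
  | Mu y s => if Nat.eqb x y then Mu y s else Mu y (subst u x s)
  | Var y => if Nat.eqb x y then u else Var y
  end.

(* unfold, as the relation defined by its recursive equations: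
   unfold(Mu x s) = unfold(s[Mu x s/x]); unfold(t) = t otherwise *)
Inductive Unfold : contract -> contract -> Prop :=
| Unfold_mu : forall x s t, Unfold (subst (Mu x s) x s) t -> Unfold (Mu x s) t
| Unfold_other : forall t, (forall x s, t <> Mu x s) -> Unfold t t.

Inductive act : Type :=
| Chk : act
| Tau : act
| AInT : BT -> act | AOutT : BT -> act
| AInL : L -> act | AOutL : L -> act
| AInS : contract -> act | AOutS : contract -> act.

Inductive step : contract -> act -> contract -> Prop :=
| st_one : step One Chk One
| st_inT : forall b s, step (InT b s) (AInT b) s
| st_outT : forall b s, step (OutT b s) (AOutT b) s
| st_outS : forall m s, step (OutS m s) (AOutS m) s
| st_inS : forall m s, step (InS m s) (AInS m) s
| st_outL : forall l s, step (Int [(l, s)]) (AOutL l) s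
| st_int : forall ps l s, 1 < length ps -> In (l, s) ps ->
    step (Int ps) Tau (Int [(l, s)])
| st_ext : forall ps l s, In (l, s) ps -> step (Ext ps) (AInL l) s
| st_mu : forall x s, step (Mu x s) Tau (subst (Mu x s) x s).

Variable leb : BT -> BT -> Prop.

Definition dual (B : contract -> contract -> Prop) (a1 a2 : act) : Prop :=
  match a1, a2 with
  | AOutL l1, AInL l2 => l1 = l2
  | AInL l1, AOutL l2 => l1 = l2
  | AOutT t1, AInT t2 => leb t1 t2
  | AInT t1, AOutT t2 => leb t2 t1
  | AOutS s1, AInS s2 => B s1 s2
  | AInS s1, AOutS s2 => B s2 s1
  | _, _ => False
  end.

Inductive par_tau (B : contract -> contract -> Prop)
  : contract -> contract -> contract -> contract -> Prop :=
| pt_left : forall r r' s, step r Tau r' -> par_tau B r s r' s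
| pt_right : forall r s s', step s Tau s' -> par_tau B r s r s'
| pt_sync : forall r r' s s' a1 a2,
    step r a1 r' -> step s a2 s' -> dual B a1 a2 -> par_tau B r s r' s'.

(* R is a compliance relation (post-fixed point of the defining functional) *)
Definition compliance_rel (B R : contract -> contract -> Prop) : Prop :=
  (forall r s, R r s -> SC r /\ SC s) /\
  (forall r s, R r s ->
     ((forall r' s', ~ par_tau B r s r' s') ->
        (exists r1, step r Chk r1) /\ (exists s1, step s Chk s1)) /\
     (forall r' s', par_tau B r s r' s' -> R r' s')).

(* rho ⊣_B sigma : membership in the greatest such relation *)
Definition compliant (B : contract -> contract -> Prop) (r s : contract) : Prop :=
  exists R, compliance_rel B R /\ R r s.

Definition subcontract (B : contract -> contract -> Prop) (s1 s2 : contract) : Prop :=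
  forall r, SC r -> compliant B r s1 -> compliant B r s2.

Definition Sfun (R B : contract -> contract -> Prop) (s1 s2 : contract) : Prop :=
  (Unfold s1 One -> Unfold s2 One) /\
  (forall t1 s1', Unfold s1 (InT t1 s1') ->
     exists t2 s2', Unfold s2 (InT t2 s2') /\ R s1' s2' /\ leb t1 t2) /\
  (forall t1 s1', Unfold s1 (OutT t1 s1') ->
     exists t2 s2', Unfold s2 (OutT t2 s2') /\ R s1' s2' /\ leb t2 t1) /\
  (forall m1 s1', Unfold s1 (OutS m1 s1') ->
     exists m2 s2', Unfold s2 (OutS m2 s2') /\ R s1' s2' /\ B m2 m1) /\
  (forall m1 s1', Unfold s1 (InS m1 s1') ->
     exists m2 s2', Unfold s2 (InS m2 s2') /\ R s1' s2' /\ B m1 m2) /\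
  (forall ps1, Unfold s1 (Ext ps1) ->
     exists ps2, Unfold s2 (Ext ps2) /\
       forall l c1, In (l, c1) ps1 -> exists c2, In (l, c2) ps2 /\ R c1 c2) /\
  (forall ps1, Unfold s1 (Int ps1) ->
     exists ps2, Unfold s2 (Int ps2) /\
       forall l c2, In (l, c2) ps2 -> exists c1, In (l, c1) ps1 /\ R c1 c2).

(* sigma1 ≼_B sigma2 : membership in the greatest R ⊆ SC^2 with R ⊆ S(R,B) *)
Definition synpre (B : contract -> contract -> Prop) (s1 s2 : contract) : Prop :=
  exists R, (forall a b, R a b -> SC a /\ SC b) /\
            (forall a b, R a b -> Sfun R B a b) /\ R s1 s2.

End Contracts.

(* Main.v *)
Require Import Defs.
From Stdlib Require Import List Arith Bool Lia Classical.
Import ListNotations.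

Section Proof.
Context {BT L : Type}.
Local Notation C := (@contract BT L).

Section Ind.
Variable P : C -> Prop.
Hypotheses (H1 : P One)
  (H2 : forall b s, P s -> P (InT b s))
  (H3 : forall b s, P s -> P (OutT b s))
  (H4 : forall m s, P m -> P s -> P (OutS m s))
  (H5 : forall m s, P m -> P s -> P (InS m s))
  (H6 : forall ps, Forall (fun p => P (snd p)) ps -> P (Ext ps))
  (H7 : forall ps, Forall (fun p => P (snd p)) ps -> P (Int ps))
  (H8 : forall x s, P s -> P (Mu x s))
  (H9 : forall x, P (Var x)).
Fixpoint cind (t : C) : P t :=
  match t as t0 return P t0 with
  | One => H1
  | InT b s => H2 b s (cind s)
  | OutT b s => H3 b s (cind s)
  | OutS m s => H4 m s (cind m) (cind s)
  | InS m s => H5 m s (cind m) (cind s)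
  | Ext ps => H6 ps ((fix G (ps : list (L * C)) : Forall (fun p => P (snd p)) ps :=
       match ps with [] => @Forall_nil _ _ | p :: q => @Forall_cons _ _ p q (cind (snd p)) (G q) end) ps)
  | Int ps => H7 ps ((fix G (ps : list (L * C)) : Forall (fun p => P (snd p)) ps :=
       match ps with [] => @Forall_nil _ _ | p :: q => @Forall_cons _ _ p q (cind (snd p)) (G q) end) ps)
  | Mu x s => H8 x s (cind s)
  | Var x => H9 x
  end.
End Ind.
Set Implicit Arguments.

Lemma guard_fold : forall ps : list (L*C),
  fold_right (fun p acc => guarded_wf (snd p) /\ acc) True ps <-> Forall (fun p => guarded_wf (snd p)) ps.
Proof.
  induction ps; simpl; split; intros H; auto.
  - destruct H; constructor; auto; apply IHps; auto.
  - inversion H; subst; split; auto; apply IHps; auto.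
Qed.

Lemma unguarded_occ : forall (t:C) x, unguarded x t = true -> occurs_free x t = true.
Proof.
  induction t as [| b s IH | b s IH | m IHm s IHs | m IHm s IHs | ps | ps | y s IH | y];
    intros x H; simpl in *; try discriminate; auto.
  destruct (x =? y); [discriminate|auto].
Qed.

Lemma occ_subst : forall (u:C) x, closed u -> forall t y,
  (occurs_free y t = false \/ y = x) -> occurs_free y (subst u x t) = false.
Proof.
  intros u x Hu t. induction t using cind; intros y Hy; simpl in *.
  - reflexivity.
  - apply IHt; auto.
  - apply IHt; auto.
  - destruct Hy as [Hy|Hy]; [apply orb_false_iff in Hy; destruct Hy|];
      rewrite IHt1, IHt2; auto.
  - destruct Hy as [Hy|Hy]; [apply orb_false_iff in Hy; destruct Hy|];
      rewrite IHt1, IHt2; auto.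
  - revert Hy; induction H as [|p ps Hp Hps IHps]; simpl; intros Hy; auto.
    destruct Hy as [Hy|Hy]; [apply orb_false_iff in Hy; destruct Hy|];
      rewrite Hp, IHps; auto.
  - revert Hy; induction H as [|p ps Hp Hps IHps]; simpl; intros Hy; auto.
    destruct Hy as [Hy|Hy]; [apply orb_false_iff in Hy; destruct Hy|];
      rewrite Hp, IHps; auto.
  - revert Hy. destruct (x =? x0) eqn:E; simpl.
    + apply Nat.eqb_eq in E; subst. destruct (y =? x0) eqn:E2; auto.
      intros [H|H]; auto. subst. rewrite Nat.eqb_refl in E2; discriminate.
    + destruct (y =? x0) eqn:E2; auto.
  - revert Hy. destruct (x =? x0) eqn:E.
    + intros; apply Hu.
    + simpl. destruct (y =? x0) eqn:E2; auto. intros [H|H]; [discriminate|subst].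
      rewrite E in E2; discriminate.
Qed.

Lemma ung_subst : forall (u:C) x, closed u -> forall t z,
  unguarded z t = false -> unguarded z (subst u x t) = false.
Proof.
  intros u x Hu t.
  induction t as [| b s IH | b s IH | m IHm s IHs | m IHm s IHs | ps | ps | y s IH | y];
    intros z H; simpl in *; auto.
  - revert H. destruct (x =? y); simpl; auto. destruct (z =? y); auto.
  - destruct (x =? y); auto. destruct (unguarded z u) eqn:E; auto.
    apply unguarded_occ in E. rewrite Hu in E; discriminate.
Qed.

Lemma guard_subst : forall (u:C) x, closed u -> guarded_wf u -> forall t,
  guarded_wf t -> guarded_wf (subst u x t).
Proof.
  intros u x Hu Hg t. induction t using cind; intros Ht; simpl in *; auto;
    try (destruct Ht; split; auto; fail).
  - destruct Ht as [Hne [Hnd Hf]]. split; [destruct ps; simpl; congruence|].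
    split; [rewrite map_map; exact Hnd|].
    rewrite guard_fold in *. rewrite Forall_forall in *. intros p Hp.
    apply in_map_iff in Hp. destruct Hp as [q [Eq Hq]]. subst p. simpl. apply H; auto.
  - destruct Ht as [Hne [Hnd Hf]]. split; [destruct ps; simpl; congruence|].
    split; [rewrite map_map; exact Hnd|].
    rewrite guard_fold in *. rewrite Forall_forall in *. intros p Hp.
    apply in_map_iff in Hp. destruct Hp as [q [Eq Hq]]. subst p. simpl. apply H; auto.
  - destruct (x =? x0); simpl; auto. destruct Ht; split; auto. apply ung_subst; auto.
  - destruct (x =? x0); simpl; auto.
Qed.

Fixpoint depth (t : C) : nat := match t with Mu _ s => S (depth s) | _ => 0 end.

Lemma depth_subst : forall (u:C) x t, unguarded x t = false -> depth (subst u x t) = depth t.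
Proof.
  intros u x t.
  induction t as [| b s IH | b s IH | m IHm s IHs | m IHm s IHs | ps | ps | y s IH | y];
    simpl; intros H; auto.
  - revert H. destruct (x =? y); simpl; auto; intros H; rewrite IH; auto.
  - rewrite H; reflexivity.
Qed.

Lemma SC_mu : forall x (s:C), SC (Mu x s) -> SC (subst (Mu x s) x s).
Proof.
  intros x s [Hc Hg]. split.
  - intros y. apply occ_subst; auto. specialize (Hc y). simpl in Hc. revert Hc.
    destruct (y =? x) eqn:E; intros Hc; [right; apply Nat.eqb_eq; auto | left; auto].
  - apply guard_subst; auto. simpl in Hg; tauto.
Qed.

Lemma unfold_total : forall n (a:C), depth a < n -> SC a -> exists u, Unfold a u.
Proof.
  induction n; intros a Hd Hsc; [lia|].
  destruct a as [|b s|b s|m s|m s|ps|ps|y s|y];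
    try (eexists; apply Unfold_other; intros; discriminate).
  destruct (IHn (subst (Mu y s) y s)) as [u Hu].
  - rewrite depth_subst. simpl in Hd; lia. destruct Hsc as [_ Hg]; simpl in Hg; tauto.
  - apply SC_mu; auto.
  - exists u; constructor; auto.
Qed.

Lemma Unfold_det : forall (t u1 u2 : C), Unfold t u1 -> Unfold t u2 -> u1 = u2.
Proof.
  intros t u1 u2 H; revert u2; induction H; intros u2 H2; inversion H2; subst; auto.
  - exfalso; eapply H0; eauto.
  - exfalso; eapply H; eauto.
Qed.

Lemma Unfold_nomu : forall (t u : C), Unfold t u -> forall x s, u <> Mu x s.
Proof. intros t u H; induction H; auto. Qed.

Inductive MuR : C -> C -> Prop :=
| mr_refl : forall a, MuR a a
| mr_step : forall x t s, MuR (subst (Mu x t) x t) s -> MuR (Mu x t) s.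

Lemma MuR_trans : forall a s s2, MuR a s -> MuR s s2 -> MuR a s2.
Proof. intros a s s2 H; induction H; intros; auto. apply mr_step; auto. Qed.

Lemma MuR_SC : forall a s, MuR a s -> SC a -> SC s.
Proof. intros a s H; induction H; intros; auto. apply IHMuR, SC_mu; auto. Qed.

Lemma MuR_unfold : forall a s u, MuR a s -> Unfold a u -> Unfold s u.
Proof.
  intros a s u H; induction H; intros Hu; auto.
  inversion Hu; subst; auto. exfalso; eapply H0; eauto.
Qed.

Lemma Unfold_MuR : forall a u, Unfold a u -> MuR a u.
Proof. intros a u H; induction H; constructor; auto. Qed.

Lemma MuR_nomu_unfold : forall a s, MuR a s -> (forall x t, s <> Mu x t) -> Unfold a s.
Proof. intros a s H; induction H; intros Hn. apply Unfold_other; auto. apply Unfold_mu; auto. Qed.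

Lemma mu_dec : forall t : C, (exists x u, t = Mu x u) \/ (forall x u, t <> Mu x u).
Proof. destruct t; try (right; intros; discriminate); left; eauto. Qed.

Lemma nodup_in : forall (ps : list (L*C)) l c c',
  NoDup (map fst ps) -> In (l,c) ps -> In (l,c') ps -> c = c'.
Proof.
  induction ps as [|[l0 c0] ps IH]; simpl; intros l c c' Hnd H1 H2; [contradiction|].
  inversion Hnd as [|x y Hn Hnd']; subst.
  destruct H1 as [E1|H1]; destruct H2 as [E2|H2].
  - congruence.
  - inversion E1; subst. exfalso; apply Hn.
    apply in_map_iff; eexists; split; [|eassumption]; reflexivity.
  - inversion E2; subst. exfalso; apply Hn.
    apply in_map_iff; eexists; split; [|eassumption]; reflexivity.
  - eapply IH; eauto.
Qed.

Section Comp.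
Variable leb : BT -> BT -> Prop.
Hypothesis leb_trans : forall t1 t2 t3, leb t1 t2 -> leb t2 t3 -> leb t1 t3.
Variable B : C -> C -> Prop.
Hypothesis B_trans : forall a b c, B a b -> B b c -> B a c.

Lemma comp_SC : forall r s, compliant leb B r s -> SC r /\ SC s.
Proof. intros r s [R [[H1 H2] HR]]; auto. Qed.

Lemma comp_step : forall r s r' s', compliant leb B r s -> par_tau leb B r s r' s' -> compliant leb B r' s'.
Proof.
  intros r s r' s' [R [[H1 H2] HR]] Hp. exists R; split; [split; auto|].
  apply (proj2 (H2 _ _ HR)); auto.
Qed.

Lemma comp_stuck : forall r s, compliant leb B r s -> (forall r' s', ~ par_tau leb B r s r' s') ->
  (exists r1, step r Chk r1) /\ (exists s1, step s Chk s1).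
Proof. intros r s [R [[H1 H2] HR]]. apply (proj1 (H2 _ _ HR)). Qed.

Lemma comp_moves : forall r u, compliant leb B r u -> (forall u1, ~ step u Chk u1) ->
  exists r' u', par_tau leb B r u r' u'.
Proof.
  intros r u H Hn. destruct (classic (exists r' u', par_tau leb B r u r' u')) as [E|E]; auto.
  exfalso. destruct (comp_stuck H) as [_ [s1 Hs1]].
  - intros r' u' Hp; apply E; eauto.
  - eapply Hn; eauto.
Qed.

Lemma comp_MuR : forall r s s', compliant leb B r s -> MuR s s' -> compliant leb B r s'.
Proof.
  intros r s s' Hc H; induction H; auto. apply IHMuR. eapply comp_step; eauto.
  apply pt_right; constructor.
Qed.

Lemma pt_inv : forall r s r' s', par_tau leb B r s r' s' ->
  (step r Tau r' /\ s' = s) \/ (step s Tau s' /\ r' = r) \/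
  exists a1 a2, step r a1 r' /\ step s a2 s' /\ dual leb B a1 a2.
Proof. intros r s r' s' H; destruct H; eauto 10. Qed.

Lemma int_pick : forall r ps l (c:C), compliant leb B r (Int ps) -> In (l,c) ps ->
  compliant leb B r (Int [(l,c)]).
Proof.
  intros r ps l c H Hin. destruct ps as [|p [|q ps']].
  - destruct Hin.
  - destruct Hin as [E|[]]; subst; auto.
  - eapply comp_step; [exact H|]. apply pt_right. apply st_int; [simpl; lia| auto].
Qed.

Lemma SC_single : forall l (c:C), SC c -> SC (Int [(l,c)]).
Proof.
  intros l c [Hc Hg]; split.
  - intros y; simpl; rewrite Hc; reflexivity.
  - simpl; split; [congruence|split; [constructor; [simpl; tauto|constructor]|tauto]].
Qed.

Lemma Unfold_single : forall l (c u:C), Unfold (Int [(l,c)]) u -> u = Int [(l,c)].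
Proof. intros l c u H; inversion H; auto. Qed.

Section Main.
Variable P : C -> C -> Prop.
Hypothesis HPsc : forall a b, P a b -> SC a /\ SC b.
Hypothesis HPS : forall a b, P a b -> Sfun leb P B a b.

Definition P' (a b : C) := P a b \/ exists l c1 c2, a = Int [(l,c1)] /\ b = Int [(l,c2)] /\ P c1 c2.

Lemma P'_SC : forall a b, P' a b -> SC a /\ SC b.
Proof.
  intros a b [H|[l [c1 [c2 [-> [-> H]]]]]]; auto.
  destruct (HPsc H); split; apply SC_single; auto.
Qed.

Lemma P'_Sfun : forall a b, P' a b -> Sfun leb P B a b.
Proof.
  intros a b [H|[l [c1 [c2 [-> [-> H]]]]]]; auto.
  unfold Sfun; repeat split; intros * Hu; apply Unfold_single in Hu; try discriminate.
  inversion Hu; subst. exists [(l,c2)]; split; [apply Unfold_other; intros; discriminate|].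
  intros l' c' [E|[]]. inversion E; subst. exists c1; split; [left; auto|auto].
Qed.

Definition R' (r s' : C) := exists s a b, compliant leb B r s /\ P' a b /\ MuR a s /\ MuR b s'.

Lemma R'_intro : forall r c1 c2, compliant leb B r c1 -> P c1 c2 -> R' r c2.
Proof. intros r c1 c2 H HP. exists c1, c1, c2; split; [auto|split; [left; auto|split; apply mr_refl]]. Qed.

Lemma R'_rel : compliance_rel leb B R'.
Proof.
  split.
  { intros r s' [s [a [b [Hc [HP [Ha Hb]]]]]]. split; [apply (comp_SC Hc)|].
    apply (MuR_SC Hb). apply (P'_SC HP). }
  intros r s' [s [a [b [Hc [HP [Ha Hb]]]]]].
  assert (Hscb : SC s') by (apply (MuR_SC Hb); apply (P'_SC HP)).
  assert (HL : forall r', step r Tau r' -> R' r' s').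
  { intros r' Hs. exists s, a, b; repeat split; auto. eapply comp_step; eauto. apply pt_left; auto. }
  destruct (mu_dec s') as [[x [t Ex]] | Hnm].
  - subst s'. split.
    + intros Hst. exfalso. eapply Hst. apply pt_right. apply st_mu.
    + intros r' s'' Hpt.
      destruct (pt_inv Hpt) as [[Hs ->] | [[Hs ->] | [a1 [a2 [Hs1 [Hs2 Hd]]]]]].
      * apply HL; auto.
      * inversion Hs; subst. exists s, a, b; repeat split; auto.
        eapply MuR_trans; [exact Hb|]. apply mr_step, mr_refl.
      * inversion Hs2; subst. destruct a1; simpl in Hd; contradiction.
  - assert (Hub : Unfold b s') by (apply MuR_nomu_unfold; auto).
    destruct (unfold_total (Nat.lt_succ_diag_r (depth a))) as [ua Hua]; [apply (P'_SC HP)|].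
    assert (Hc' : compliant leb B r ua)
      by (apply (comp_MuR Hc); apply Unfold_MuR; apply (MuR_unfold Ha Hua)).
    assert (Hsca : SC ua) by (apply (MuR_SC (Unfold_MuR Hua)); apply (P'_SC HP)).
    destruct (P'_Sfun HP) as [S1 [S2 [S3 [S4 [S5 [S6 S7]]]]]].
    destruct ua as [|t1 c1|t1 c1|m1 c1|m1 c1|ps1|ps1|y u|y].
    +
      pose proof (Unfold_det Hub (S1 Hua)) as Es; subst s'. split.
      * intros Hst; apply (comp_stuck Hc' Hst).
      * intros r' s'' Hpt.
        destruct (pt_inv Hpt) as [[Hs ->] | [[Hs ->] | [a1 [a2 [Hs1 [Hs2 Hd]]]]]].
        -- apply HL; auto.
        -- inversion Hs.
        -- inversion Hs2; subst. destruct a1; simpl in Hd; contradiction.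
    +
      destruct (S2 _ _ Hua) as [t2 [c2 [Hu2 [HPc Hlt]]]].
      pose proof (Unfold_det Hub Hu2) as Es; subst s'. split.
      * intros Hst. destruct (comp_moves Hc') as [r1 [u1 Hm]]. { intros u1 Hu1; inversion Hu1. }
        destruct (pt_inv Hm) as [[Hs _] | [[Hs _] | [a1 [a2 [Hs1 [Hs2 Hd]]]]]].
        -- exfalso; eapply Hst; apply pt_left; eauto.
        -- inversion Hs.
        -- inversion Hs2; subst. destruct a1; simpl in Hd; try contradiction.
           exfalso; eapply Hst; eapply pt_sync; [eauto | apply st_inT | simpl; eapply leb_trans; eauto].
      * intros r' s'' Hpt.
        destruct (pt_inv Hpt) as [[Hs ->] | [[Hs ->] | [a1 [a2 [Hs1 [Hs2 Hd]]]]]].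
        -- apply HL; auto.
        -- inversion Hs.
        -- inversion Hs2; subst. destruct a1; simpl in Hd; try contradiction.
           inversion Hs1; subst.
           destruct (comp_moves Hc') as [r1 [u1 Hm]]. { intros u1 Hu1; inversion Hu1. }
           destruct (pt_inv Hm) as [[Hs _] | [[Hs _] | [a1 [a2 [Hs1' [Hs2' Hd']]]]]];
             [inversion Hs|inversion Hs|].
           inversion Hs1'; subst. inversion Hs2'; subst. simpl in Hd'.
           eapply R'_intro; [|exact HPc].
           eapply comp_step; [exact Hc'|]. eapply pt_sync; [apply st_outT|apply st_inT|simpl; auto].
    +
      destruct (S3 _ _ Hua) as [t2 [c2 [Hu2 [HPc Hlt]]]].
      pose proof (Unfold_det Hub Hu2) as Es; subst s'. split.
      * intros Hst. destruct (comp_moves Hc') as [r1 [u1 Hm]]. { intros u1 Hu1; inversion Hu1. }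
        destruct (pt_inv Hm) as [[Hs _] | [[Hs _] | [a1 [a2 [Hs1 [Hs2 Hd]]]]]].
        -- exfalso; eapply Hst; apply pt_left; eauto.
        -- inversion Hs.
        -- inversion Hs2; subst. destruct a1; simpl in Hd; try contradiction.
           exfalso; eapply Hst; eapply pt_sync; [eauto | apply st_outT | simpl; eapply leb_trans; eauto].
      * intros r' s'' Hpt.
        destruct (pt_inv Hpt) as [[Hs ->] | [[Hs ->] | [a1 [a2 [Hs1 [Hs2 Hd]]]]]].
        -- apply HL; auto.
        -- inversion Hs.
        -- inversion Hs2; subst. destruct a1; simpl in Hd; try contradiction.
           inversion Hs1; subst.
           destruct (comp_moves Hc') as [r1 [u1 Hm]]. { intros u1 Hu1; inversion Hu1. }
           destruct (pt_inv Hm) as [[Hs _] | [[Hs _] | [a1 [a2 [Hs1' [Hs2' Hd']]]]]];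
             [inversion Hs|inversion Hs|].
           inversion Hs1'; subst. inversion Hs2'; subst. simpl in Hd'.
           eapply R'_intro; [|exact HPc].
           eapply comp_step; [exact Hc'|]. eapply pt_sync; [apply st_inT|apply st_outT|simpl; auto].
    +
      destruct (S4 _ _ Hua) as [t2 [c2 [Hu2 [HPc Hlt]]]].
      pose proof (Unfold_det Hub Hu2) as Es; subst s'. split.
      * intros Hst. destruct (comp_moves Hc') as [r1 [u1 Hm]]. { intros u1 Hu1; inversion Hu1. }
        destruct (pt_inv Hm) as [[Hs _] | [[Hs _] | [a1 [a2 [Hs1 [Hs2 Hd]]]]]].
        -- exfalso; eapply Hst; apply pt_left; eauto.
        -- inversion Hs.
        -- inversion Hs2; subst. destruct a1; simpl in Hd; try contradiction.
           exfalso; eapply Hst; eapply pt_sync; [eauto | apply st_outS | simpl; eapply B_trans; eauto].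
      * intros r' s'' Hpt.
        destruct (pt_inv Hpt) as [[Hs ->] | [[Hs ->] | [a1 [a2 [Hs1 [Hs2 Hd]]]]]].
        -- apply HL; auto.
        -- inversion Hs.
        -- inversion Hs2; subst. destruct a1; simpl in Hd; try contradiction.
           inversion Hs1; subst.
           destruct (comp_moves Hc') as [r1 [u1 Hm]]. { intros u1 Hu1; inversion Hu1. }
           destruct (pt_inv Hm) as [[Hs _] | [[Hs _] | [a1 [a2 [Hs1' [Hs2' Hd']]]]]];
             [inversion Hs|inversion Hs|].
           inversion Hs1'; subst. inversion Hs2'; subst. simpl in Hd'.
           eapply R'_intro; [|exact HPc].
           eapply comp_step; [exact Hc'|]. eapply pt_sync; [apply st_inS|apply st_outS|simpl; auto].
    +
      destruct (S5 _ _ Hua) as [t2 [c2 [Hu2 [HPc Hlt]]]].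
      pose proof (Unfold_det Hub Hu2) as Es; subst s'. split.
      * intros Hst. destruct (comp_moves Hc') as [r1 [u1 Hm]]. { intros u1 Hu1; inversion Hu1. }
        destruct (pt_inv Hm) as [[Hs _] | [[Hs _] | [a1 [a2 [Hs1 [Hs2 Hd]]]]]].
        -- exfalso; eapply Hst; apply pt_left; eauto.
        -- inversion Hs.
        -- inversion Hs2; subst. destruct a1; simpl in Hd; try contradiction.
           exfalso; eapply Hst; eapply pt_sync; [eauto | apply st_inS | simpl; eapply B_trans; eauto].
      * intros r' s'' Hpt.
        destruct (pt_inv Hpt) as [[Hs ->] | [[Hs ->] | [a1 [a2 [Hs1 [Hs2 Hd]]]]]].
        -- apply HL; auto.
        -- inversion Hs.
        -- inversion Hs2; subst. destruct a1; simpl in Hd; try contradiction.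
           inversion Hs1; subst.
           destruct (comp_moves Hc') as [r1 [u1 Hm]]. { intros u1 Hu1; inversion Hu1. }
           destruct (pt_inv Hm) as [[Hs _] | [[Hs _] | [a1 [a2 [Hs1' [Hs2' Hd']]]]]];
             [inversion Hs|inversion Hs|].
           inversion Hs1'; subst. inversion Hs2'; subst. simpl in Hd'.
           eapply R'_intro; [|exact HPc].
           eapply comp_step; [exact Hc'|]. eapply pt_sync; [apply st_outS|apply st_inS|simpl; auto].
    +
      destruct (S6 _ Hua) as [ps2 [Hu2 H6]].
      pose proof (Unfold_det Hub Hu2) as Es; subst s'. split.
      * intros Hst. destruct (comp_moves Hc') as [r1 [u1 Hm]]. { intros u1 Hu1; inversion Hu1. }
        destruct (pt_inv Hm) as [[Hs _] | [[Hs _] | [a1 [a2 [Hs1 [Hs2 Hd]]]]]].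
        -- exfalso; eapply Hst; apply pt_left; eauto.
        -- inversion Hs.
        -- inversion Hs2 as [| | | | | | |ps l0 s0 Hin|]; subst.
           destruct a1; simpl in Hd; try contradiction. subst.
           destruct (H6 _ _ Hin) as [c2 [Hin2 _]].
           exfalso; eapply Hst; eapply pt_sync; [eauto | apply st_ext; eauto | simpl; reflexivity].
      * intros r' s'' Hpt.
        destruct (pt_inv Hpt) as [[Hs ->] | [[Hs ->] | [a1 [a2 [Hs1 [Hs2 Hd]]]]]].
        -- apply HL; auto.
        -- inversion Hs.
        -- inversion Hs2 as [| | | | | | |ps l0 s0 Hin2|]; subst.
           destruct a1; simpl in Hd; try contradiction. subst.
           inversion Hs1; subst.
           destruct (comp_moves Hc') as [r1 [u1 Hm]]. { intros u1 Hu1; inversion Hu1. }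
           destruct (pt_inv Hm) as [[Hs _] | [[Hs _] | [a1 [a2 [Hs1' [Hs2' Hd']]]]]].
           ++ inversion Hs; subst; simpl in *; lia.
           ++ inversion Hs.
           ++ inversion Hs1'; subst; [|simpl in *; lia].
              inversion Hs2' as [| | | | | | |ps l1 s1 Hin|]; subst. simpl in Hd'. subst.
              destruct (H6 _ _ Hin) as [c2 [Hin2' HPc]].
              destruct Hscb as [_ [_ [Hnd _]]].
              pose proof (nodup_in _ _ _ _ Hnd Hin2 Hin2') as Ec; subst.
              eapply R'_intro; [|exact HPc].
              eapply comp_step; [exact Hc'|]. eapply pt_sync; [apply st_outL|apply st_ext; eauto|simpl; auto].
    +
      destruct (S7 _ Hua) as [ps2 [Hu2 H7]].
      pose proof (Unfold_det Hub Hu2) as Es; subst s'. split.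
      * intros Hst. destruct Hscb as [_ [Hne _]].
        destruct ps2 as [|[l c2] [|q ps2']]; [congruence| |].
        -- destruct (H7 l c2 (or_introl eq_refl)) as [c1 [Hin1 HPc]].
           pose proof (int_pick _ _ Hc' Hin1) as Hc1.
           destruct (comp_moves Hc1) as [r1 [u1 Hm]]. { intros u1 Hu1; inversion Hu1. }
           destruct (pt_inv Hm) as [[Hs _] | [[Hs _] | [a1 [a2 [Hs1 [Hs2 Hd]]]]]].
           ++ exfalso; eapply Hst; apply pt_left; eauto.
           ++ inversion Hs; subst; simpl in *; lia.
           ++ inversion Hs2; subst; [|simpl in *; lia].
              exfalso; eapply Hst; eapply pt_sync; [eauto | apply st_outL | eauto].
        -- exfalso; eapply Hst; apply pt_right; apply st_int; [simpl; lia| left; reflexivity].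
      * intros r' s'' Hpt.
        destruct (pt_inv Hpt) as [[Hs ->] | [[Hs ->] | [a1 [a2 [Hs1 [Hs2 Hd]]]]]].
        -- apply HL; auto.
        -- inversion Hs; subst.
           match goal with Hin : In _ ps2 |- _ => destruct (H7 _ _ Hin) as [c1 [Hin1 HPc]] end.
           exists (Int [(l,c1)]), (Int [(l,c1)]), (Int [(l,s0)]).
           split; [apply (int_pick _ _ Hc' Hin1)|]. split; [right; eauto 6|].
           split; constructor.
        -- inversion Hs2; subst; [| destruct a1; simpl in Hd; contradiction].
           edestruct (H7 _ _ (or_introl eq_refl)) as [c1 [Hin1 HPc]].
           eapply R'_intro; [|exact HPc].
           eapply comp_step; [apply (int_pick _ _ Hc' Hin1)|]. eapply pt_sync; [eauto|apply st_outL|eauto].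
    +
      exfalso; eapply Unfold_nomu; eauto.
    +
      exfalso. pose proof (proj1 Hsca y) as E. simpl in E. rewrite Nat.eqb_refl in E; discriminate.
Qed.

End Main.
End Comp.
End Proof.

Theorem mainTheorem4 (BT L : Type) (leb : BT -> BT -> Prop)
  (leb_refl : forall t, leb t t)
  (leb_trans : forall t1 t2 t3, leb t1 t2 -> leb t2 t3 -> leb t1 t3)
  (B : @contract BT L -> @contract BT L -> Prop)
  (B_SC : forall a b, B a b -> SC a /\ SC b)
  (B_trans : forall a b c, B a b -> B b c -> B a c)
  (s1 s2 : @contract BT L) :
  SC s1 -> SC s2 -> synpre leb B s1 s2 -> subcontract leb B s1 s2.
Proof.
  intros _ _ [P [HPsc [HPS HP]]] r Hr Hc.
  exists (R' leb B P). split.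
  - apply R'_rel; auto.
  - exists s1, s1, s2. split; [auto|split; [left; auto|split; apply mr_refl]].
Qed.
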